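(* Let $(W,S)$ be a Coxeter group with $W$ finite, and let $\mathfrak o$ be an orientation of $(W,S)$. Then $\mathfrak o=\mathfrak o_w$ for some $w\in W$.
   Context: $\ell$ is the length function of $(W,S)$ and $m(s,t)$ the order of $st$. An orientation of $(W,S)$ is a map $\mathfrak o:W\times S\to\{\pm1\}$ such that (OR1) $\mathfrak o(ws,s)=-\mathfrak o(w,s)$ for all $w\in W,s\in S$; and (OR2) whenever $s,t\in S$ with $m=m(s,t)<\infty$ and $w\in W$, the two sequences $(\mathfrak o(w,s),\mathfrak o(ws,t),\mathfrak o(wst,s),\dots)$ and $(\mathfrak o(w,t),\mathfrak o(wt,s),\mathfrak o(wts,t),\dots)$, each of length $m$, are for some $0\le k\le m$ either of the form $(+,\dots,+,-,\dots,-)$ ($k$ plus signs then $m-k$ minus signs) and $(-,\dots,-,+,\dots,+)$ ($m-k$ minus then $k$ plus), or of the form $(-,\dots,-,+,\dots,+)$ ($k$ minus then $m-k$ plus) and $(+,\dots,+,-,\dots,-)$ ($m-k$ plus then $k$ minus). For $w_0\in W$, the orientation towards $w_0$ is $\mathfrak o_{w_0}(w,s)=+1$ if $\ell(w_0^{-1}ws)<\ell(w_0^{-1}w)$ and $-1$ if $\ell(w_0^{-1}ws)>\ell(w_0^{-1}w)$. *)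

(* Defs.v *)
From mathcomp Require Import all_boot all_order all_fingroup.
Set Implicit Arguments.
Unset Strict Implicit.
Unset Printing Implicit Defensive.
Local Open Scope group_scope.

Definition is_group (H : Type) (mul : H -> H -> H) (one : H) (inv : H -> H) :=
  [/\ forall x y z, mul x (mul y z) = mul (mul x y) z,
      forall x, mul one x = x, forall x, mul x one = x,
      forall x, mul (inv x) x = one & forall x, mul x (inv x) = one].

Fixpoint hpow (H : Type) (mul : H -> H -> H) (one : H) (x : H) (n : nat) : H :=
  if n is n'.+1 then mul x (hpow mul one x n') else one.

(* (W,S) is a Coxeter system, W = gT finite: S generates W, consists of
   involutions, and W has the presentation
   < S | s^2 = 1, (st)^{m(s,t)} = 1 >  with m(s,t) the order of st,
   expressed by the universal property of the presentation w.r.t. all groups. *)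
Definition coxeter_system (gT : finGroupType) (S : {set gT}) : Prop :=
  [/\ <<S>> = [set: gT],
      {in S, forall s, s != 1 /\ s * s = 1} &
      forall (H : Type) (mul : H -> H -> H) (one : H) (inv : H -> H)
             (f : gT -> H),
        is_group mul one inv ->
        {in S, forall s, mul (f s) (f s) = one} ->
        {in S &, forall s t, hpow mul one (mul (f s) (f t)) #[s * t] = one} ->
        exists phi : gT -> H,
          (forall x y, phi (x * y) = mul (phi x) (phi y)) /\
          {in S, forall s, phi s = f s}].

Definition word_of_len (gT : finGroupType) (S : {set gT}) (w : gT) (n : nat)
  : bool :=
  [exists t : n.-tuple gT, all (mem S) t && (\prod_(x <- t) x == w)].

(* length function of (W,S): the least n such that w is a product of n
   elements of S (searched in 0..#|W|, which suffices when S generates W). *)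
Definition coxlen (gT : finGroupType) (S : {set gT}) (w : gT) : nat :=
  find (word_of_len S w) (iota 0 #|gT|.+1).

Fixpoint alt (gT : finGroupType) (s t : gT) (i : nat) : gT :=
  if i is i'.+1 then alt s t i' * (if odd i' then t else s) else 1.

(* Orientations: o w s = true encodes +1 and false encodes -1. *)
Definition is_orientation (gT : finGroupType) (S : {set gT})
  (o : gT -> gT -> bool) : Prop :=
  (forall w, {in S, forall s, o (w * s) s = ~~ o w s}) /\
  (forall s t w, s \in S -> t \in S ->
     let m := #[s * t] in
     let A i := o (w * alt s t i) (if odd i then t else s) in
     let B i := o (w * alt t s i) (if odd i then s else t) in
     exists2 k, k <= m &
       (forall i, i < m -> A i = (i < k) /\ B i = (m - k <= i)) \/
       (forall i, i < m -> A i = (k <= i) /\ B i = (i < m - k))).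

Definition orient_to (gT : finGroupType) (S : {set gT}) (w0 : gT)
  (w s : gT) : bool :=
  coxlen S (w0^-1 * w * s) < coxlen S (w0^-1 * w).

(* Main.v *)
Require Import Defs.
From mathcomp Require Import all_boot all_order all_fingroup all_algebra.
From mathcomp Require Import cyclic zify.
From Stdlib Require Import FunctionalExtensionality.
Set Implicit Arguments.
Unset Strict Implicit.
Unset Printing Implicit Defensive.
Local Open Scope group_scope.
Import Order.TTheory GRing.Theory.

Lemma inv_invol (gT : finGroupType) (s : gT) : s * s = 1 -> s^-1 = s.
Proof. by move=> H; apply/eqP; rewrite eq_invg_mul H. Qed.

Lemma altSS (gT : finGroupType) (s t : gT) j :
  alt s t j.+2 = s * t * alt s t j.
Proof.
elim: j => [|j IH]; first by rewrite /= !mul1g mulg1.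
have -> : alt s t j.+3 = alt s t j.+2 * (if odd j.+2 then t else s) by [].
by rewrite IH /= negbK -!mulgA.
Qed.

Lemma alt_add2 (gT : finGroupType) (s t : gT) n k :
  alt s t (n.*2 + k) = (s * t) ^+ n * alt s t k.
Proof.
elim: n => [|n IH]; first by rewrite mul1g.
by rewrite doubleS !addSn altSS IH expgS mulgA.
Qed.

Lemma alt_odd (gT : finGroupType) (s t : gT) n :
  alt s t n.*2.+1 = (s * t) ^+ n * s.
Proof. by rewrite -addn1 alt_add2 /= mul1g. Qed.

Lemma alt_even (gT : finGroupType) (s t : gT) n :
  alt s t n.*2 = (s * t) ^+ n.
Proof. by rewrite -[n.*2]addn0 alt_add2 mulg1. Qed.

Lemma letter_inv (gT : finGroupType) (s t : gT) j :
  s * s = 1 -> t * t = 1 -> (if odd j then t else s)^-1 = (if odd j then t else s).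
Proof. by move=> Hs Ht; case: odd; apply: inv_invol. Qed.

Lemma letter_sq (gT : finGroupType) (s t : gT) j :
  s * s = 1 -> t * t = 1 -> (if odd j then t else s) * (if odd j then t else s) = 1.
Proof. by move=> Hs Ht; case: odd. Qed.

Lemma alt_wall (gT : finGroupType) (s t : gT) j :
  s * s = 1 -> t * t = 1 ->
  alt s t j * (if odd j then t else s) * (alt s t j)^-1 = alt s t j.*2.+1.
Proof.
move=> Hs Ht; elim: j => [|j IH]; first by rewrite /= invg1 !mul1g mulg1.
rewrite doubleS altSS -IH.
have E : alt s t j.+2 = s * t * alt s t j by rewrite altSS.
rewrite [alt s t j.+2]/= in E.
rewrite [alt s t j.+1]/= invMg letter_inv //.
by rewrite !mulgA -E.
Qed.

Lemma alt_rev (gT : finGroupType) (s t : gT) m i :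
  s * s = 1 -> t * t = 1 -> (s * t) ^+ m = 1 -> i <= m.*2 ->
  alt t s i = alt s t (m.*2 - i).
Proof.
move=> Hs Ht Hm; elim: i => [|i IH] Hi; first by rewrite subn0 alt_even Hm.
have Hi' : i <= m.*2 by apply: ltnW.
have E : m.*2 - i = (m.*2 - i.+1).+1 by rewrite subnS prednK // subn_gt0.
rewrite [alt t s i.+1]/= IH // E [alt s t (_.+1)]/=.
have -> : odd (m.*2 - i.+1) = ~~ odd i by rewrite oddB // odd_double.
by case: (odd i) => /=; rewrite -mulgA ?Hs ?Ht mulg1.
Qed.

Lemma prod_ord_seq (gT : finGroupType) n (c : 'I_n -> gT) :
  \prod_(i < n) c i = \prod_(y <- [seq c i | i <- enum 'I_n]) y.
Proof. by rewrite big_map enumT. Qed.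

Lemma alt_mulr (gT : finGroupType) (s t u : gT) j :
  s * s = 1 -> t * t = 1 -> u \in [set s; t] -> j < (#[s * t]).*2 ->
  exists2 j', j' < (#[s * t]).*2 & alt s t j * u = alt s t j'.
Proof.
move=> Hs Ht Hu Hj.
set m := #[s * t].
have m0 : 0 < m by apply: order_gt0.
have Hm : (s * t) ^+ m = 1 by apply: expg_order.
have evn : forall k, k.+1 = m.*2 -> odd k.
  by move=> k Ek; have := odd_double m; rewrite -Ek /=; case: (odd k).
case/set2P: Hu => ->.
- case Oj: (odd j).
  + case: j Hj Oj => [//|j] Hj /= /negbTE Oj.
    by exists j; [apply: ltnW | rewrite Oj -mulgA Hs mulg1].
  + exists j.+1; last by rewrite /= Oj.
    rewrite ltn_neqAle Hj andbT; apply/eqP => E.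
    by have := evn _ E; rewrite Oj.
- case Oj: (odd j).
  + case: (ltngtP j.+1 m.*2) => [Hlt|Hgt|Heq].
    * by exists j.+1 => //; rewrite /= Oj.
    * by rewrite ltnS leqNgt Hj in Hgt.
    * exists 0; first by rewrite double_gt0.
      have -> : alt s t j * t = alt s t j.+1 by rewrite /= Oj.
      by rewrite Heq alt_even Hm.
  + case: j Hj Oj => [|j] Hj Oj.
    * exists (m.*2 - 1); first by rewrite subn1 prednK ?double_gt0.
      rewrite -(alt_rev Hs Ht Hm) /=.
      - by rewrite mul1g.
      - by rewrite double_gt0.
    * move: Oj => /= /negbFE Oj.
      exists j; first by apply: ltnW.
      by rewrite /= Oj -mulgA Ht mulg1.
Qed.

Lemma seq_alt (gT : finGroupType) (s t : gT) (l : seq gT) :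
  s * s = 1 -> t * t = 1 -> all (mem [set s; t]) l ->
  exists2 j, j < (#[s * t]).*2 & \prod_(x <- l) x = alt s t j.
Proof.
move=> Hs Ht; elim/last_ind: l => [|l x IH].
  by move=> _; exists 0; [rewrite double_gt0 order_gt0 | rewrite big_nil].
rewrite all_rcons => /andP [Hx Hl].
have [j Hj E] := IH Hl.
rewrite big_rcons E.
by apply: alt_mulr.
Qed.

Lemma gen_alt (gT : finGroupType) (s t x : gT) :
  s * s = 1 -> t * t = 1 -> x \in <<[set s; t]>> ->
  exists2 j, j < (#[s * t]).*2 & x = alt s t j.
Proof.
move=> Hs Ht /gen_prodgP [n [c Hc ->]].
rewrite prod_ord_seq; apply: seq_alt => //.
by apply/allP => y /mapP [i _ ->]; apply: Hc.
Qed.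

Definition pmul (gT : finGroupType) (V : zmodType) (x y : gT * (gT -> V)) :
  gT * (gT -> V) := (x.1 * y.1, fun w => (x.2 w + y.2 (w * x.1)%g)%R).
Definition pone (gT : finGroupType) (V : zmodType) : gT * (gT -> V) :=
  (1, fun _ => 0%R).
Definition pinv (gT : finGroupType) (V : zmodType) (x : gT * (gT -> V)) :
  gT * (gT -> V) := (x.1^-1, fun w => (- x.2 (w * x.1^-1)%g)%R).

Lemma pgroup_ax (gT : finGroupType) (V : zmodType) :
  is_group (@pmul gT V) (@pone gT V) (@pinv gT V).
Proof.
split.
- move=> [x1 x2] [y1 y2] [z1 z2]; rewrite /pmul /=; congr pair; first by rewrite mulgA.
  by apply: functional_extensionality => w; rewrite addrA !mulgA.
- move=> [x1 x2]; rewrite /pmul /=; congr pair; first by rewrite mul1g.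
  by apply: functional_extensionality => w; rewrite add0r mulg1.
- move=> [x1 x2]; rewrite /pmul /=; congr pair; first by rewrite mulg1.
  by apply: functional_extensionality => w; rewrite addr0.
- move=> [x1 x2]; rewrite /pmul /=; congr pair; first by rewrite mulVg.
  by apply: functional_extensionality => w; rewrite addNr.
- move=> [x1 x2]; rewrite /pmul /=; congr pair; first by rewrite mulgV.
  by apply: functional_extensionality => w; rewrite mulgK addrN.
Qed.

Lemma hpow_p (gT : finGroupType) (V : zmodType) (d : gT -> gT -> V) (s t : gT) n :
  hpow (@pmul gT V) (@pone gT V) (pmul (s, fun w => d w s) (t, fun w => d w t)) n =
  ((s * t) ^+ n, fun w => (\sum_(j < n.*2) d (w * alt s t j)%g (if odd j then t else s))%R).
Proof.
elim: n => [|n IH].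
  rewrite /pone expg0; congr pair; apply: functional_extensionality => w.
  by rewrite big_ord0.
rewrite [LHS]/= IH /pmul /=; congr pair; first by rewrite expgS.
apply: functional_extensionality => w.
rewrite doubleS !big_ord_recl /= !mul1g mulg1 addrA; congr (_ + _)%R.
apply: eq_bigr => i _; rewrite /bump /= add0n negbK.
have E : alt s t i * (if odd i then t else s) * (if ~~ odd i then t else s) = alt s t i.+2 by [].
rewrite E altSS.
by rewrite !mulgA.
Qed.

Lemma potential (gT : finGroupType) (S : {set gT}) (V : zmodType)
  (d : gT -> gT -> V) :
  coxeter_system S ->
  (forall w s, s \in S -> d (w * s) s = (- d w s)%R) ->
  (forall w s t, s \in S -> t \in S ->
     (\sum_(j < (#[s * t]).*2) d (w * alt s t j)%g (if odd j then t else s))%R = 0%R) ->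
  exists P : gT -> V, forall w s, s \in S -> P (w * s) = (P w + d w s)%R.
Proof.
case=> HgenS Hinv Huniv Hanti Hcyc.
have [||phi [Hphi HphiS]] := Huniv _ (@pmul gT V) (@pone gT V) (@pinv gT V)
   (fun s => (s, fun w => d w s)) (@pgroup_ax gT V).
- move=> s Hs; rewrite /pmul /pone /=; congr pair; first by case: (Hinv s Hs).
  by apply: functional_extensionality => w; rewrite Hanti // addrN.
- move=> s t Hs Ht; rewrite hpow_p expg_order /pone; congr pair.
  by apply: functional_extensionality => w; apply: Hcyc.
pose g x := (phi x).1.
have gM : forall x y, g (x * y) = g x * g y by move=> x y; rewrite /g Hphi.
have g1 : g 1 = 1.
  by apply: (@mulgI _ (g 1)); rewrite -gM !mulg1.
have gid : forall x, g x = x.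
  move=> x; have : x \in <<S>> by rewrite HgenS inE.
  case/gen_prodgP => n [c Hc ->].
  rewrite (big_morph g gM g1); apply: eq_bigr => i _.
  by rewrite /g HphiS.
exists (fun w => (phi w).2 1) => w s Hs.
rewrite Hphi /pmul /= (HphiS s Hs) /= mul1g.
by have := gid w; rewrite /g => ->.
Qed.

Definition prodw (gT : finGroupType) (l : seq gT) := \prod_(x <- l) x.

Lemma wol_seq (gT : finGroupType) (S : {set gT}) (l : seq gT) :
  all (mem S) l -> word_of_len S (prodw l) (size l).
Proof. by move=> Hl; apply/existsP; exists (in_tuple l); rewrite /= Hl eqxx. Qed.

Lemma wol_inv (gT : finGroupType) (S : {set gT}) w n :
  word_of_len S w n -> exists l : seq gT, [/\ all (mem S) l, prodw l = w & size l = n].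
Proof.
case/existsP => t /andP [Ht /eqP Hw]; exists (val t); split => //.
by rewrite size_tuple.
Qed.

Lemma exists_word (gT : finGroupType) (S : {set gT}) x :
  <<S>> = [set: gT] -> exists l : seq gT, all (mem S) l /\ prodw l = x.
Proof.
move=> HS; have : x \in <<S>> by rewrite HS inE.
case/gen_prodgP => n [c Hc ->]; exists [seq c i | i <- enum 'I_n]; split.
  by apply/allP => y /mapP [i _ ->]; apply: Hc.
by rewrite /prodw -prod_ord_seq.
Qed.

Lemma prodw_cat (gT : finGroupType) (l1 l2 : seq gT) :
  prodw (l1 ++ l2) = prodw l1 * prodw l2.
Proof. by rewrite /prodw big_cat. Qed.

Lemma short_word (gT : finGroupType) (S : {set gT}) x :
  <<S>> = [set: gT] ->
  exists l : seq gT, [/\ all (mem S) l, prodw l = x & size l < #|gT|].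
Proof.
move=> HS.
have ex : exists n, word_of_len S x n.
  have [l [Hl Hx]] := exists_word x HS; exists (size l); rewrite -Hx.
  exact: wol_seq.
case: (ex_minnP ex) => n0 Hn0 Hmin.
have [l [Hl Hx Hsz]] := wol_inv Hn0.
exists l; split => //; rewrite Hsz.
pose f (i : 'I_n0.+1) := prodw (take i l).
have key : forall i j : nat, i < j -> j <= n0 -> prodw (take i l) != prodw (take j l).
  move=> i j Hij Hj; apply/eqP => E.
  pose l' := take i l ++ drop j l.
  have Hl' : all (mem S) l'.
    rewrite all_cat; apply/andP; split; apply/allP => y Hy; apply: (allP Hl).
      exact: mem_take Hy.
    exact: mem_drop Hy.
  have Hx' : prodw l' = x.
    by rewrite prodw_cat E -prodw_cat cat_take_drop.
  have := Hmin _ (eq_ind _ (fun z => word_of_len S z (size l')) (wol_seq Hl') _ Hx').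
  rewrite size_cat size_take size_drop Hsz.
  have -> : (if i < n0 then i else n0) = i by rewrite ifT //; apply: leq_trans Hj.
  by lia.
have finj : injective f.
  move=> i j E; apply/val_inj => /=.
  case: (ltngtP i j) => // H.
  - by have := key _ _ H (ltn_ord j : j < n0.+1); rewrite /f in E; rewrite E eqxx.
  - by have := key _ _ H (ltn_ord i : i < n0.+1); rewrite /f in E; rewrite E eqxx.
by have := leq_card f finj; rewrite card_ord.
Qed.

Lemma coxlen_word (gT : finGroupType) (S : {set gT}) x :
  <<S>> = [set: gT] ->
  exists l : seq gT, [/\ all (mem S) l, prodw l = x & size l = coxlen S x].
Proof.
move=> HS; have [l [Hl Hx Hsz]] := short_word x HS.
have Hhas : has (word_of_len S x) (iota 0 #|gT|.+1).
  apply/hasP; exists (size l); first by rewrite mem_iota leq0n add0n ltnS (ltnW Hsz).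
  by rewrite -Hx; apply: wol_seq.
have := nth_find 0 Hhas; rewrite nth_iota ?add0n; first by move/wol_inv.
by move: Hhas; rewrite has_find size_iota.
Qed.

Lemma coxlen_le (gT : finGroupType) (S : {set gT}) (l : seq gT) :
  all (mem S) l -> coxlen S (prodw l) <= size l.
Proof.
move=> Hl; case: (leqP (size l) #|gT|) => Hsz.
  rewrite leqNgt; apply/negP => H.
  have := before_find 0 H; rewrite nth_iota ?add0n ?ltnS //.
  by rewrite wol_seq.
apply: leq_trans (find_size _ _) _.
by rewrite size_iota.
Qed.

Lemma Z2_add_self (x : 'Z_2) : (x + x = 0)%R.
Proof. by case: x => [[|[|//]] ?]; apply/val_inj. Qed.

Lemma Z2_opp (x : 'Z_2) : (- x = x)%R.
Proof. by case: x => [[|[|//]] ?]; apply/val_inj. Qed.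

Lemma wall_sq (gT : finGroupType) (w s : gT) : s * s = 1 ->
  w * s * s * (w * s)^-1 = w * s * w^-1.
Proof. by move=> Hs; rewrite invMg (inv_invol Hs) !mulgA -(mulgA (w * s)) Hs mulg1. Qed.

Lemma parity_pot (gT : finGroupType) (S : {set gT}) :
  coxeter_system S ->
  exists Pi : gT -> gT -> 'Z_2, forall r w s, s \in S ->
    Pi r (w * s) = (Pi r w + ((w * s * w^-1)%g == r)%:R)%R.
Proof.
move=> cox; have [HS Hinv _] := cox.
pose d (w s : gT) : {ffun gT -> 'Z_2} := [ffun r => ((w * s * w^-1)%g == r)%:R%R].
have [||P HP] := @potential gT S _ d cox.
- move=> w s Hs; apply/ffunP => r; rewrite !ffunE wall_sq ?Z2_opp //.
  by case: (Hinv s Hs).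
- move=> w s t Hs Ht; apply/ffunP => r; rewrite sum_ffunE ffunE.
  have Hs2 : s * s = 1 by case: (Hinv s Hs).
  have Ht2 : t * t = 1 by case: (Hinv t Ht).
  have E : forall j : nat, w * alt s t j * (if odd j then t else s) * (w * alt s t j)^-1
       = w * ((s * t) ^+ j * s) * w^-1.
    move=> j; rewrite -alt_odd -(alt_wall _ Hs2 Ht2) invMg !mulgA.
    by rewrite -!mulgA.
  under eq_bigr do rewrite ffunE E.
  rewrite -addnn big_split_ord /=.
  rewrite -[X in (_ + X)%R](@eq_bigr _ _ _ _ _ _
     (fun i : 'I_#[s * t] => ((w * ((s * t) ^+ i * s) * w^-1)%g == r)%:R%R)).
    exact: Z2_add_self.
  by move=> i _; rewrite expgD expg_order mul1g.
by exists (fun r x => P x r) => r w s Hs; rewrite HP // ffunE /d ffunE.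
Qed.

Lemma del (gT : finGroupType) (S : {set gT}) (Pi : gT -> gT -> 'Z_2) r :
  {in S, forall s, s * s = 1} ->
  (forall r w s, s \in S -> Pi r (w * s) = (Pi r w + ((w * s * w^-1)%g == r)%:R)%R) ->
  forall (l : seq gT) w, all (mem S) l -> Pi r (w * prodw l) != Pi r w ->
  exists l' : seq gT, [/\ all (mem S) l', size l' < size l &
                         prodw l' = w^-1 * r * w * prodw l].
Proof.
move=> Hinv HPi; elim=> [|x l IH] w; first by rewrite /prodw big_nil mulg1 eqxx.
rewrite /= => /andP [Hx Hl].
rewrite {1}/prodw big_cons -/(prodw l) mulgA => Hne.
case: (eqVneq (Pi r (w * x * prodw l)) (Pi r (w * x))) => H; last first.
  have [l' [Hl' Hsz Hp]] := IH _ Hl H.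
  exists (x :: l'); split => //=; first by rewrite Hx.
  rewrite /prodw big_cons -/(prodw l') Hp /prodw big_cons -/(prodw l).
  by rewrite invMg !mulgA mulgV mul1g.
rewrite H HPi // in Hne.
have Er : w * x * w^-1 = r.
  by apply/eqP; move: Hne; case: (_ == r) => //; rewrite GRing.addr0 eqxx.
exists l; split => //.
rewrite /prodw big_cons -/(prodw l) -Er.
by rewrite !mulgA mulVg mul1g mulgKV Hinv // mul1g.
Qed.

Lemma sep_shorter (gT : finGroupType) (S : {set gT}) (Pi : gT -> gT -> 'Z_2) r w0 z :
  coxeter_system S ->
  (forall r w s, s \in S -> Pi r (w * s) = (Pi r w + ((w * s * w^-1)%g == r)%:R)%R) ->
  Pi r w0 != Pi r z -> coxlen S (w0^-1 * (r * z)) < coxlen S (w0^-1 * z).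
Proof.
move=> [HS Hinv _] HPi Hne.
have Hinv' : {in S, forall s, s * s = 1} by move=> s Hs; case: (Hinv s Hs).
have [l [Hl Hp Hsz]] := coxlen_word (w0^-1 * z) HS.
have Hz : z = w0 * prodw l by rewrite Hp mulKVg.
have Hne' : Pi r (w0 * prodw l) != Pi r w0 by rewrite -Hz eq_sym.
have [l' [Hl' Hsz' Hp']] := del Hinv' HPi Hl Hne'.
rewrite -Hsz.
have -> : w0^-1 * (r * z) = prodw l' by rewrite Hp' {1}Hz !mulgA.
exact: leq_ltn_trans (coxlen_le Hl') Hsz'.
Qed.

Lemma letter_rev (gT : finGroupType) (s t : gT) m i : i < m ->
  (if odd (m + i) then t else s) = (if odd (m.-1 - i) then s else t).
Proof.
move=> Hi; have -> : m + i = (m.-1 - i + 1) + i.*2 by lia.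
by rewrite oddD odd_double addn1 /=; case: odd.
Qed.

Lemma or2_rev (gT : finGroupType) (S : {set gT}) (o : gT -> gT -> bool) s t w :
  is_orientation S o -> s \in S -> t \in S ->
  forall i, i < #[s * t] ->
  o (w * alt t s (#[s * t].-1 - i)) (if odd (#[s * t].-1 - i) then s else t)
  = o (w * alt s t i) (if odd i then t else s).
Proof.
move=> [_ Hor2] Hs Ht i Hi.
have [k Hk [H|H]] := Hor2 s t w Hs Ht.
- have Hj : #[s * t].-1 - i < #[s * t] by lia.
  have [HA _] := H i Hi; have [_ HB] := H _ Hj.
  rewrite /= in HA HB; rewrite HA HB.
  by apply/idP/idP; lia.
- have Hj : #[s * t].-1 - i < #[s * t] by lia.
  have [HA _] := H i Hi; have [_ HB] := H _ Hj.
  rewrite /= in HA HB; rewrite HA HB.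
  by apply/idP/idP; lia.
Qed.

Lemma orient_pot (gT : finGroupType) (S : {set gT}) (o : gT -> gT -> bool) :
  coxeter_system S -> is_orientation S o ->
  exists h : gT -> int, forall w s, s \in S ->
    h (w * s) = (h w + (if o w s then -1 else 1))%R.
Proof.
move=> cox Hor; have [HS Hinv _] := cox; have [Hor1 _] := Hor.
pose d (w s : gT) : int := if o w s then (-1)%R else 1%R.
have [||h Hh] := @potential gT S _ d cox; last by exists h.
- by move=> w s Hs; rewrite /d Hor1 //; case: (o w s).
move=> w s t Hs Ht.
have Hs2 : s * s = 1 by case: (Hinv s Hs).
have Ht2 : t * t = 1 by case: (Hinv t Ht).
set m := #[s * t].
have Hm : (s * t) ^+ m = 1 by apply: expg_order.
rewrite -addnn big_split_ord /=.
rewrite -[X in (_ + X)%R](@eq_bigr _ _ _ _ _ _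
   (fun i : 'I_m => - d (w * alt s t i)%g (if odd i then t else s))%R).
  by rewrite sumrN addrN.
move=> i _; have Hi := ltn_ord i.
have E1 : alt s t (m + i) = alt t s (m - i).
  by rewrite (alt_rev Hs2 Ht2 Hm); [congr alt; lia | lia].
have E2 : m - i = (m.-1 - i).+1 by lia.
rewrite E1 E2 [alt t s _.+1]/= mulgA.
rewrite -(letter_rev s t Hi) /d Hor1; last by case: odd.
rewrite -(or2_rev w Hor Hs Ht Hi) letter_rev //.
by case: (o _ _).
Qed.

Lemma mod_two_m (i j0 m : nat) : i < m.*2 -> j0 < m ->
  (i == j0 %[mod m]) = (i == j0) || (i == j0 + m).
Proof.
move=> Hi Hj; rewrite (modn_small Hj).
case: (ltnP i m) => Him.
  rewrite (modn_small Him); apply/idP/idP => [/eqP H | /orP [/eqP H|/eqP H]];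
    [apply/orP; left; apply/eqP | apply/eqP | ]; lia.
have -> : i = (i - m) + m by lia.
rewrite modnDr modn_small; last by lia.
apply/idP/idP => [/eqP H | /orP [/eqP H|/eqP H]];
  [apply/orP; right; apply/eqP | | apply/eqP]; lia.
Qed.

Lemma wall_alt (gT : finGroupType) (s t c : gT) j :
  s * s = 1 -> t * t = 1 ->
  c * alt s t j * (if odd j then t else s) * (c * alt s t j)^-1
  = c * ((s * t) ^+ j * s) * c^-1.
Proof.
move=> Hs2 Ht2; rewrite -alt_odd -(alt_wall _ Hs2 Ht2) invMg !mulgA.
by rewrite -!mulgA.
Qed.

Lemma pi_track (gT : finGroupType) (S : {set gT}) (Pi : gT -> gT -> 'Z_2) s t p j0 r :
  (forall r w s, s \in S -> Pi r (w * s) = (Pi r w + ((w * s * w^-1)%g == r)%:R)%R) ->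
  s \in S -> t \in S -> s * s = 1 -> t * t = 1 -> j0 < #[s * t] ->
  forall i, i <= (#[s * t]).*2 ->
  r = p * ((s * t) ^+ j0 * s) * p^-1 ->
  Pi r (p * alt s t i) = (Pi r p + ((j0 < i) + (j0 + #[s * t] < i))%:R)%R.
Proof.
move=> HPi Hs Ht Hs2 Ht2 Hj0; elim=> [|i IH] Hi Er.
  by rewrite mulg1 addr0.
have Hlet : (if odd i then t else s) \in S by case: odd.
have Hi2 : i <= (#[s * t]).*2 by apply: ltnW.
rewrite [alt s t i.+1]/= mulgA HPi // (IH Hi2 Er) wall_alt //.
rewrite Er (can_eq (mulgK p^-1)) (can_eq (mulKg p)) (can_eq (mulgK s)).
rewrite eq_expg_mod_order mod_two_m //.
rewrite -addrA -natrD; congr (_ + _%:R)%R.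
have := order_gt0 (s * t); move: Hi Hj0; move: #[s * t] => m; lia.
Qed.

Lemma Z2_flip (a b : 'Z_2) : (a != b + 1)%R = (a == b).
Proof. by case: a => [[|[|//]] ?]; case: b => [[|[|//]] ?]. Qed.

Lemma cycle_good (gT : finGroupType) (S : {set gT}) (o : gT -> gT -> bool)
  (Pi : gT -> gT -> 'Z_2) s t p :
  is_orientation S o ->
  (forall r w s, s \in S -> Pi r (w * s) = (Pi r w + ((w * s * w^-1)%g == r)%:R)%R) ->
  s \in S -> t \in S -> s * s = 1 -> t * t = 1 -> o p s = false -> o p t = false ->
  forall j, j < (#[s * t]).*2 ->
  o (p * alt s t j) (if odd j then t else s) =
  (Pi (p * alt s t j * (if odd j then t else s) * (p * alt s t j)^-1) p
   != Pi (p * alt s t j * (if odd j then t else s) * (p * alt s t j)^-1) (p * alt s t j)).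
Proof.
move=> Hor HPi Hs Ht Hs2 Ht2 Hps Hpt.
have [Hor1 Hor2] := Hor.
have m0 := order_gt0 (s * t).
have Hm : (s * t) ^+ #[s * t] = 1 by apply: expg_order.
have AB : forall i, i < #[s * t] ->
    o (p * alt s t i) (if odd i then t else s) = false /\
    o (p * alt t s i) (if odd i then s else t) = false.
  have [k Hk [H|H]] := Hor2 s t p Hs Ht.
  - have [HA0 _] := H 0 m0; rewrite /= mulg1 Hps in HA0.
    move=> i Hi; have [HA HB] := H i Hi; rewrite /= in HA HB; rewrite HA HB.
    by split; apply/negbTE; lia.
  - have [HA0 HB0] := H 0 m0; rewrite /= mulg1 ?Hps ?Hpt in HA0 HB0.
    move=> i Hi; have [HA HB] := H i Hi; rewrite /= in HA HB; rewrite HA HB.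
    by split; apply/negbTE; lia.
move=> j Hj; rewrite wall_alt //.
case: (ltnP j #[s * t]) => Hjm.
  rewrite (AB j Hjm).1.
  rewrite (@pi_track _ S Pi s t p j _ HPi Hs Ht Hs2 Ht2 Hjm j (ltnW Hj) erefl).
  by rewrite ltnn ltnNge leq_addr /= addr0 eqxx.
have [i Hi ->] : exists2 i, i < #[s * t] & j = #[s * t] + i.
  by exists (j - #[s * t]); lia.
have E1 : alt s t (#[s * t] + i) = alt t s (#[s * t] - i).
  by rewrite (alt_rev Hs2 Ht2 Hm); [congr alt; lia | lia].
have E2 : #[s * t] - i = (#[s * t].-1 - i).+1 by lia.
have Hlet : (if odd (#[s * t].-1 - i) then s else t) \in S by case: odd.
have -> : o (p * alt s t (#[s * t] + i)) (if odd (#[s * t] + i) then t else s) = true.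
  rewrite E1 E2 [alt t s _.+1]/= mulgA letter_rev // Hor1 //.
  have Hi' : #[s * t].-1 - i < #[s * t] by lia.
  by rewrite (AB _ Hi').2.
have -> : (s * t) ^+ (#[s * t] + i) = (s * t) ^+ i by rewrite expgD Hm mul1g.
have Hj' : #[s * t] + i <= (#[s * t]).*2 by lia.
rewrite (@pi_track _ S Pi s t p i _ HPi Hs Ht Hs2 Ht2 Hi _ Hj' erefl).
have -> : (i < #[s * t] + i) + (i + #[s * t] < #[s * t] + i) = 1%N by lia.
by rewrite Z2_flip eqxx.
Qed.

Theorem lemma2p5p13 (gT : finGroupType) (S : {set gT})
  (o : gT -> gT -> bool) :
  coxeter_system S -> is_orientation S o ->
  exists w0 : gT, forall w, {in S, forall s, o w s = orient_to S w0 w s}.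
Proof.
move=> cox Hor.
have [HS Hinv _] := cox.
have [Hor1 _] := Hor.
have Hinv2 : {in S, forall s, s * s = 1} by move=> s Hs; case: (Hinv s Hs).
have [Pi HPi] := parity_pot cox.
have [h Hh] := orient_pot cox Hor.
have [w0 _ Hw0] := @arg_minP _ _ gT 1 xpredT h isT.
have sink : forall s, s \in S -> o w0 s = false.
  move=> s Hs; apply/negbTE/negP => Ho; have := Hw0 (w0 * s) isT.
  rewrite Hh // Ho; lia.
have SA : forall w s, s \in S ->
    orient_to S w0 w s = (Pi (w * s * w^-1) w0 != Pi (w * s * w^-1) w).
  move=> w s Hs; rewrite /orient_to; set r := w * s * w^-1.
  case: (boolP (Pi r w0 != Pi r w)) => H.
    by have := sep_shorter cox HPi H; rewrite /r mulgKV mulgA.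
  have H' : Pi r w0 != Pi r (w * s).
    by rewrite HPi // eqxx Z2_flip; apply/negPn.
  have := sep_shorter cox HPi H'.
  have -> : w * s * w^-1 * (w * s) = w.
    by rewrite mulgA mulgKV -mulgA Hinv2 // mulg1.
  rewrite !mulgA => Hlt.
  by apply/negbTE; rewrite -leqNgt ltnW.
have step : forall y,
    (forall y', coxlen S (w0^-1 * y') < coxlen S (w0^-1 * y) ->
       forall s', s' \in S -> o y' s' = (Pi (y' * s' * y'^-1) w0 != Pi (y' * s' * y'^-1) y')) ->
    forall s, s \in S -> o y s = (Pi (y * s * y^-1) w0 != Pi (y * s * y^-1) y).
  move=> y IH s Hs; set r := y * s * y^-1.
  case: (boolP (Pi r w0 != Pi r y)) => E.
    have := sep_shorter cox HPi E; rewrite /r mulgKV => Hlt.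
    have := IH _ Hlt s Hs; rewrite wall_sq ?Hinv2 // -/r.
    rewrite HPi // eqxx Z2_flip Hor1 //.
    by move/negbRL => ->; rewrite (negbTE E).
  move/negPn/eqP: E => E.
  apply/negbTE/negP => Hys.
  case: (eqVneq y w0) => [Eyw|Nyw].
    by move: Hys; rewrite Eyw sink.
  have [l [Hl Hp Hsz]] := coxlen_word (w0^-1 * y) HS.
  case/lastP: l Hl Hp Hsz => [|l' t] Hl Hp Hsz.
    rewrite /prodw big_nil in Hp.
    have : w0 == y by rewrite eq_mulVg1 -Hp.
    by rewrite eq_sym (negbTE Nyw).
  move: Hl; rewrite all_rcons => /andP [Ht Hl'].
  have Hyt : coxlen S (w0^-1 * (y * t)) < coxlen S (w0^-1 * y).
    have -> : w0^-1 * (y * t) = prodw l'.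
      by rewrite mulgA -Hp /prodw big_rcons /= -mulgA Hinv2 // mulg1.
    rewrite -Hsz size_rcons ltnS; exact: coxlen_le.
  set D := <<[set s; t]>>.
  set R := y *: D.
  have inR : forall x, x \in D -> y * x \in R by move=> x Hx; rewrite mem_lcoset mulKg.
  have yR : y \in R by rewrite -[y]mulg1 inR // group1.
  have sD : s \in D by apply: mem_gen; rewrite !inE eqxx.
  have tD : t \in D by apply: mem_gen; rewrite !inE eqxx orbT.
  case: (@arg_minnP gT y (fun z => z \in R) (fun z => coxlen S (w0^-1 * z)) yR)
    => p pR pmin.
  have Hpd : coxlen S (w0^-1 * p) < coxlen S (w0^-1 * y).
    by apply: leq_ltn_trans (pmin _ (inR _ tD)) Hyt.
  have factc : forall r', r' * p \in R -> Pi r' w0 = Pi r' p.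
    move=> r' Hr'; apply/eqP; apply/negPn/negP => Hne.
    have := sep_shorter cox HPi Hne; have := pmin _ Hr'; move=> /= H1 H2; by rewrite ltnNge H1 in H2.
  have pD : y^-1 * p \in D by rewrite -mem_lcoset.
  have caseI : forall u, u \in D -> u \in S -> o p u = false.
    move=> u HuD HuS; rewrite (IH p Hpd u HuS) factc ?eqxx //.
    by rewrite mulgKV /R mem_lcoset mulgA groupM.
  have Hs2 := Hinv2 s Hs; have Ht2 := Hinv2 t Ht.
  have := cycle_good Hor HPi Hs Ht Hs2 Ht2 (caseI s sD Hs) (caseI t tD Ht).
  move=> CG.
  have [j Hj Ej] : exists2 j, j < (#[s * t]).*2 & p^-1 * y = alt s t j.
    apply: gen_alt => //.
    by rewrite -[p^-1 * y]invgK invMg invgK groupV.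
  have Ey : y = p * alt s t j by rewrite -Ej mulKVg.
  have Hrp : Pi r w0 = Pi r p.
    by apply: factc; rewrite /r -!mulgA inR // groupM.
  suff : o y s = (Pi r p != Pi r y) by rewrite Hys -Hrp E eqxx.
  case Oj: (odd j).
    case: j Hj Ej Ey Oj => [//|j'] Hj Ej Ey /= /negbTE Oj'.
    have := CG j' (ltnW Hj); rewrite Oj'.
    set c := p * alt s t j'.
    have Eyc : y = c * s by rewrite Ey /c [alt s t j'.+1]/= Oj' mulgA.
    have Er : r = c * s * c^-1 by rewrite /r Eyc wall_sq.
    rewrite -Er Eyc Hor1 // HPi // -Er eqxx Z2_flip.
    by move=> ->; rewrite negbK.
  by have := CG j Hj; rewrite Oj -Ey.
have SB : forall n y s, coxlen S (w0^-1 * y) <= n -> s \in S ->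
    o y s = (Pi (y * s * y^-1) w0 != Pi (y * s * y^-1) y).
  elim=> [|n IHn] y s Hy Hs; apply: step => // y' Hy'.
    by exfalso; lia.
  by move=> s' Hs'; apply: IHn => //; lia.
exists w0 => w s Hs.
by rewrite SA //; apply: (SB _ w s (leqnn _) Hs).
Qed.
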